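(* Let $f\colon X\to Y$ be a morphism in a pre-Hilbert $*$-category. The following are equivalent: (i) $f$ is contractive; (ii) $f$ has a jointly epic codilation; (iii) $f$ has a codilation; (iv) $\begin{bmatrix}1 & f^*\\ f & 1\end{bmatrix}\geq 0$ as an endomorphism of $X\oplus Y$.
   Context: A $*$-category is a category with a choice of $f^*\colon Y\to X$ for each $f\colon X\to Y$ such that $1^*=1$, $(gf)^*=f^*g^*$, $(f^* )^*=f$; $f$ is an isometry if $f^*f=1$. A pre-Hilbert $*$-category is a $*$-category with (R1) a zero object, (R2) orthonormal biproducts of all pairs of objects (biproducts $(X,s_1,r_1,s_2,r_2)$ with $r_k=s_k^*$; matrices of morphisms between biproducts are taken with respect to these), (R3) an isometric kernel for every morphism, and (R4) every diagonal $\Delta\colon X\to X\oplus X$ a kernel of some morphism; such a category is additive. For a Hermitian endomorphism $a$ of $A$, $a\geq 0$ means $a=y^*y$ for some $y\colon A\to Y$, and $a\le b$ means $b-a\ge 0$. A morphism $f$ is contractive if $f^*f\leq 1$. A codilation of $f\colon X\to Y$ is a cospan $(T,t_1,t_2)$ with $t_1\colon X\to T$, $t_2\colon Y\to T$ isometries and $t_2^*t_1=f$; it is jointly epic if $ut_1=vt_1$ and $ut_2=vt_2$ imply $u=v$. *)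

(* Defs.v *)
Record StarCat := {
  Obj : Type;
  Hom : Obj -> Obj -> Type;
  idm : forall X : Obj, Hom X X;
  comp : forall X Y Z : Obj, Hom Y Z -> Hom X Y -> Hom X Z;
  comp_assoc : forall (W X Y Z : Obj) (h : Hom Y Z) (g : Hom X Y) (f : Hom W X),
      comp W Y Z h (comp W X Y g f) = comp W X Z (comp X Y Z h g) f;
  comp_id_l : forall (X Y : Obj) (f : Hom X Y), comp X Y Y (idm Y) f = f;
  comp_id_r : forall (X Y : Obj) (f : Hom X Y), comp X X Y f (idm X) = f;
  star : forall X Y : Obj, Hom X Y -> Hom Y X;
  star_id : forall X : Obj, star X X (idm X) = idm X;
  star_comp : forall (X Y Z : Obj) (g : Hom Y Z) (f : Hom X Y),
      star X Z (comp X Y Z g f) = comp Z Y X (star X Y f) (star Y Z g);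
  star_invol : forall (X Y : Obj) (f : Hom X Y), star Y X (star X Y f) = f
}.

Arguments Hom {_} _ _.
Arguments idm {_} _.
Arguments comp {_ _ _ _} _ _.
Arguments star {_ _ _} _.

(* Biproducts are given as chosen data (X (+) Y, s1, r1, s2, r2); matrices
   are taken with respect to these chosen orthonormal biproducts.        *)
Record PreHilbertCat := {
  PH_cat :> StarCat;
  zobj : Obj PH_cat;
  to_zero : forall X : Obj PH_cat, Hom X zobj;
  from_zero : forall X : Obj PH_cat, Hom zobj X;
  to_zero_uniq : forall (X : Obj PH_cat) (u : Hom X zobj), u = to_zero X;
  from_zero_uniq : forall (X : Obj PH_cat) (u : Hom zobj X), u = from_zero X;
  bp : Obj PH_cat -> Obj PH_cat -> Obj PH_cat;
  bp_s1 : forall X Y, Hom X (bp X Y);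
  bp_s2 : forall X Y, Hom Y (bp X Y);
  bp_r1 : forall X Y, Hom (bp X Y) X;
  bp_r2 : forall X Y, Hom (bp X Y) Y;
  bp_orth1 : forall X Y, bp_r1 X Y = star (bp_s1 X Y);
  bp_orth2 : forall X Y, bp_r2 X Y = star (bp_s2 X Y);
  bp_r1s1 : forall X Y, comp (bp_r1 X Y) (bp_s1 X Y) = idm X;
  bp_r2s2 : forall X Y, comp (bp_r2 X Y) (bp_s2 X Y) = idm Y;
  bp_r1s2 : forall X Y, comp (bp_r1 X Y) (bp_s2 X Y)
                        = comp (from_zero X) (to_zero Y);
  bp_r2s1 : forall X Y, comp (bp_r2 X Y) (bp_s1 X Y)
                        = comp (from_zero Y) (to_zero X);
  bp_pair : forall W X Y, Hom W X -> Hom W Y -> Hom W (bp X Y);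
  bp_pair_r1 : forall W X Y (f : Hom W X) (g : Hom W Y),
      comp (bp_r1 X Y) (bp_pair W X Y f g) = f;
  bp_pair_r2 : forall W X Y (f : Hom W X) (g : Hom W Y),
      comp (bp_r2 X Y) (bp_pair W X Y f g) = g;
  bp_pair_uniq : forall W X Y (f : Hom W X) (g : Hom W Y) (h : Hom W (bp X Y)),
      comp (bp_r1 X Y) h = f -> comp (bp_r2 X Y) h = g -> h = bp_pair W X Y f g;
  bp_coprod : forall W X Y (f : Hom X W) (g : Hom Y W),
      exists h : Hom (bp X Y) W,
        comp h (bp_s1 X Y) = f /\ comp h (bp_s2 X Y) = g /\
        forall h' : Hom (bp X Y) W,
          comp h' (bp_s1 X Y) = f -> comp h' (bp_s2 X Y) = g -> h' = h;
  ker_exists : forall (X Y : Obj PH_cat) (f : Hom X Y),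
      exists (K : Obj PH_cat) (k : Hom K X),
        comp (star k) k = idm K /\
        comp f k = comp (from_zero Y) (to_zero K) /\
        forall (W : Obj PH_cat) (h : Hom W X),
          comp f h = comp (from_zero Y) (to_zero W) ->
          exists u : Hom W K, comp k u = h /\
            forall u' : Hom W K, comp k u' = h -> u' = u;
  (* (R4) every diagonal is a kernel of some morphism *)
  diag_kernel : forall X : Obj PH_cat,
      exists (Z : Obj PH_cat) (g : Hom (bp X X) Z),
        comp g (bp_pair X X X (idm X) (idm X))
          = comp (from_zero Z) (to_zero X) /\
        forall (W : Obj PH_cat) (h : Hom W (bp X X)),
          comp g h = comp (from_zero Z) (to_zero W) ->
          exists u : Hom W X, comp (bp_pair X X X (idm X) (idm X)) u = h /\
            forall u' : Hom W X, comp (bp_pair X X X (idm X) (idm X)) u' = h -> u' = u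
}.

Arguments bp {_} _ _.
Arguments bp_s1 {_} _ _.
Arguments bp_s2 {_} _ _.
Arguments bp_r1 {_} _ _.
Arguments bp_r2 {_} _ _.
Arguments bp_pair {_ _ _ _} _ _.

Section Ops.
Variable C : PreHilbertCat.

Definition diag (X : Obj C) : Hom X (bp X X) := bp_pair (idm X) (idm X).

Definition addm {X Y : Obj C} (f g : Hom X Y) : Hom X Y :=
  comp (star (diag Y)) (bp_pair f g).

Definition isometry {X Y : Obj C} (f : Hom X Y) : Prop :=
  comp (star f) f = idm X.

Definition positive {A : Obj C} (a : Hom A A) : Prop :=
  exists (Y : Obj C) (y : Hom A Y), a = comp (star y) y.

(* a <= b : b - a >= 0, i.e. the (unique, by additivity) c with a + c = b
   is positive *)
Definition le_herm {A : Obj C} (a b : Hom A A) : Prop :=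
  exists c : Hom A A, addm a c = b /\ positive c.

Definition contractive {X Y : Obj C} (f : Hom X Y) : Prop :=
  le_herm (comp (star f) f) (idm X).

Definition is_codilation {X Y T : Obj C} (f : Hom X Y)
    (t1 : Hom X T) (t2 : Hom Y T) : Prop :=
  isometry t1 /\ isometry t2 /\ comp (star t2) t1 = f.

Definition jointly_epic {X Y T : Obj C} (t1 : Hom X T) (t2 : Hom Y T) : Prop :=
  forall (W : Obj C) (u v : Hom T W),
    comp u t1 = comp v t1 -> comp u t2 = comp v t2 -> u = v.

Definition mx2 {X Y : Obj C} (a : Hom X X) (b : Hom Y X) (c : Hom X Y)
    (d : Hom Y Y) : Hom (bp X Y) (bp X Y) :=
  addm (addm (addm (comp (bp_s1 X Y) (comp a (bp_r1 X Y)))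
                   (comp (bp_s1 X Y) (comp b (bp_r2 X Y))))
             (comp (bp_s2 X Y) (comp c (bp_r1 X Y))))
       (comp (bp_s2 X Y) (comp d (bp_r2 X Y))).

End Ops.

Arguments diag {C} X.
Arguments addm {C X Y} f g.
Arguments isometry {C X Y} f.
Arguments positive {C A} a.
Arguments le_herm {C A} a b.
Arguments contractive {C X Y} f.
Arguments is_codilation {C X Y T} f t1 t2.
Arguments jointly_epic {C X Y T} t1 t2.
Arguments mx2 {C X Y} a b c d.

(* Main.v *)
Require Import Defs.

Section H.
Variable C : PreHilbertCat.
Local Notation pr := (@bp_pair C _ _ _).
Implicit Types X Y Z W V A B D K T : Obj C.

Definition zm (A B : Obj C) : Hom A B := comp (from_zero C B) (to_zero C A).

Lemma comp_from_zero A B (h : Hom A B) : comp h (from_zero C A) = from_zero C B.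
Proof. apply from_zero_uniq. Qed.
Lemma to_zero_comp A B (h : Hom A B) : comp (to_zero C B) h = to_zero C A.
Proof. apply to_zero_uniq. Qed.
Lemma zm_l A B D (h : Hom B D) : comp h (zm A B) = zm A D.
Proof. unfold zm. rewrite comp_assoc, comp_from_zero. reflexivity. Qed.
Lemma zm_r A B D (h : Hom A B) : comp (zm B D) h = zm A D.
Proof. unfold zm. rewrite <- comp_assoc, to_zero_comp. reflexivity. Qed.
Lemma star_from_zero A : star (from_zero C A) = to_zero C A.
Proof. apply to_zero_uniq. Qed.
Lemma star_to_zero A : star (to_zero C A) = from_zero C A.
Proof. apply from_zero_uniq. Qed.
Lemma star_zm A B : star (zm A B) = zm B A.
Proof. unfold zm. rewrite star_comp, star_from_zero, star_to_zero. reflexivity. Qed.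

Lemma r1s2 X Y : comp (@bp_r1 C X Y) (@bp_s2 C X Y) = zm Y X.
Proof. exact (bp_r1s2 C X Y). Qed.
Lemma r2s1 X Y : comp (@bp_r2 C X Y) (@bp_s1 C X Y) = zm X Y.
Proof. exact (bp_r2s1 C X Y). Qed.
Lemma star_s1 X Y : star (@bp_s1 C X Y) = (@bp_r1 C X Y).
Proof. symmetry; apply bp_orth1. Qed.
Lemma star_s2 X Y : star (@bp_s2 C X Y) = (@bp_r2 C X Y).
Proof. symmetry; apply bp_orth2. Qed.
Lemma star_r1 X Y : star (@bp_r1 C X Y) = (@bp_s1 C X Y).
Proof. rewrite bp_orth1, star_invol. reflexivity. Qed.
Lemma star_r2 X Y : star (@bp_r2 C X Y) = (@bp_s2 C X Y).
Proof. rewrite bp_orth2, star_invol. reflexivity. Qed.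

Lemma pair_ext W X Y (h h' : Hom W (bp X Y)) :
  comp (@bp_r1 C X Y) h = comp (@bp_r1 C X Y) h' ->
  comp (@bp_r2 C X Y) h = comp (@bp_r2 C X Y) h' -> h = h'.
Proof.
  intros E1 E2. rewrite (bp_pair_uniq C W X Y _ _ h eq_refl eq_refl).
  symmetry; apply bp_pair_uniq; auto.
Qed.

Lemma copair_ext W X Y (h h' : Hom (bp X Y) W) :
  comp h (@bp_s1 C X Y) = comp h' (@bp_s1 C X Y) ->
  comp h (@bp_s2 C X Y) = comp h' (@bp_s2 C X Y) -> h = h'.
Proof.
  intros E1 E2.
  destruct (bp_coprod C W X Y (comp h (@bp_s1 C X Y)) (comp h (@bp_s2 C X Y))) as [k [_ [_ Hu]]].
  rewrite (Hu h eq_refl eq_refl). symmetry; apply Hu; auto.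
Qed.

Lemma pair_comp V W X Y (a : Hom W X) (b : Hom W Y) (v : Hom V W) :
  comp (pr a b) v = pr (comp a v) (comp b v).
Proof.
  apply bp_pair_uniq; rewrite comp_assoc; [rewrite bp_pair_r1 | rewrite bp_pair_r2]; reflexivity.
Qed.

Lemma pair_s1 W X Y (h : Hom W X) : pr h (zm W Y) = comp (@bp_s1 C X Y) h.
Proof.
  symmetry; apply bp_pair_uniq; rewrite comp_assoc.
  - rewrite bp_r1s1, comp_id_l. reflexivity.
  - rewrite r2s1, zm_r. reflexivity.
Qed.
Lemma pair_s2 W X Y (h : Hom W Y) : pr (zm W X) h = comp (@bp_s2 C X Y) h.
Proof.
  symmetry; apply bp_pair_uniq; rewrite comp_assoc.
  - rewrite r1s2, zm_r. reflexivity.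
  - rewrite bp_r2s2, comp_id_l. reflexivity.
Qed.
Lemma pair_diag W X (a : Hom W X) : pr a a = comp (diag X) a.
Proof. unfold diag. rewrite pair_comp, !comp_id_l. reflexivity. Qed.

Lemma codiag_s1 X : comp (star (diag X)) (@bp_s1 C X X) = idm X.
Proof.
  transitivity (star (comp (@bp_r1 C X X) (diag X))).
  - rewrite star_comp, star_r1. reflexivity.
  - unfold diag. rewrite bp_pair_r1, star_id. reflexivity.
Qed.
Lemma codiag_s2 X : comp (star (diag X)) (@bp_s2 C X X) = idm X.
Proof.
  transitivity (star (comp (@bp_r2 C X X) (diag X))).
  - rewrite star_comp, star_r2. reflexivity.
  - unfold diag. rewrite bp_pair_r2, star_id. reflexivity.
Qed.

Lemma addm_0r X Y (h : Hom X Y) : addm h (zm X Y) = h.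
Proof. unfold addm. rewrite pair_s1, comp_assoc, codiag_s1, comp_id_l. reflexivity. Qed.
Lemma addm_0l X Y (h : Hom X Y) : addm (zm X Y) h = h.
Proof. unfold addm. rewrite pair_s2, comp_assoc, codiag_s2, comp_id_l. reflexivity. Qed.

Lemma addm_comp_r V X Y (a b : Hom X Y) (v : Hom V X) :
  comp (addm a b) v = addm (comp a v) (comp b v).
Proof. unfold addm. rewrite <- comp_assoc, pair_comp. reflexivity. Qed.

Lemma codiag_nat Y Z (u : Hom Y Z) :
  comp u (star (diag Y)) =
  comp (star (diag Z)) (pr (comp u (@bp_r1 C Y Y)) (comp u (@bp_r2 C Y Y))).
Proof.
  apply copair_ext.
  - rewrite <- !comp_assoc, codiag_s1, comp_id_r, pair_comp, <- !comp_assoc,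
      bp_r1s1, r2s1, comp_id_r, zm_l, pair_s1, comp_assoc, codiag_s1, comp_id_l.
    reflexivity.
  - rewrite <- !comp_assoc, codiag_s2, comp_id_r, pair_comp, <- !comp_assoc,
      bp_r2s2, r1s2, comp_id_r, zm_l, pair_s2, comp_assoc, codiag_s2, comp_id_l.
    reflexivity.
Qed.

Lemma addm_comp_l X Y Z (a b : Hom X Y) (u : Hom Y Z) :
  comp u (addm a b) = addm (comp u a) (comp u b).
Proof.
  unfold addm. rewrite comp_assoc, codiag_nat, <- comp_assoc, pair_comp,
    <- !comp_assoc, bp_pair_r1, bp_pair_r2. reflexivity.
Qed.

Lemma id_split X Y :
  idm (bp X Y) = addm (comp (@bp_s1 C X Y) (@bp_r1 C X Y)) (comp (@bp_s2 C X Y) (@bp_r2 C X Y)).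
Proof.
  apply copair_ext; rewrite comp_id_l, addm_comp_r, <- !comp_assoc.
  - rewrite bp_r1s1, r2s1, comp_id_r, zm_l, addm_0r. reflexivity.
  - rewrite bp_r2s2, r1s2, comp_id_r, zm_l, addm_0l. reflexivity.
Qed.


Lemma r1s1x X Y W (h : Hom W X) : comp (@bp_r1 C X Y) (comp (@bp_s1 C X Y) h) = h.
Proof. rewrite comp_assoc, bp_r1s1, comp_id_l. reflexivity. Qed.
Lemma r2s2x X Y W (h : Hom W Y) : comp (@bp_r2 C X Y) (comp (@bp_s2 C X Y) h) = h.
Proof. rewrite comp_assoc, bp_r2s2, comp_id_l. reflexivity. Qed.
Lemma r1s2x X Y W (h : Hom W Y) : comp (@bp_r1 C X Y) (comp (@bp_s2 C X Y) h) = zm W X.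
Proof. rewrite comp_assoc, r1s2, zm_r. reflexivity. Qed.
Lemma r2s1x X Y W (h : Hom W X) : comp (@bp_r2 C X Y) (comp (@bp_s1 C X Y) h) = zm W Y.
Proof. rewrite comp_assoc, r2s1, zm_r. reflexivity. Qed.

Ltac nrm := repeat progress (rewrite <- ?comp_assoc, ?r1s1x, ?r2s2x, ?r1s2x, ?r2s1x,
   ?bp_r1s1, ?bp_r2s2, ?r1s2, ?r2s1, ?comp_id_l, ?comp_id_r, ?zm_l, ?zm_r,
   ?addm_0l, ?addm_0r).

Lemma r1_star X Y W (h : Hom (bp X Y) W) : comp (@bp_r1 C X Y) (star h) = star (comp h (@bp_s1 C X Y)).
Proof. rewrite star_comp, star_s1. reflexivity. Qed.
Lemma r2_star X Y W (h : Hom (bp X Y) W) : comp (@bp_r2 C X Y) (star h) = star (comp h (@bp_s2 C X Y)).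
Proof. rewrite star_comp, star_s2. reflexivity. Qed.

Lemma mx_ext X Y (h h' : Hom (bp X Y) (bp X Y)) :
  comp (@bp_r1 C X Y) (comp h (@bp_s1 C X Y)) = comp (@bp_r1 C X Y) (comp h' (@bp_s1 C X Y)) ->
  comp (@bp_r2 C X Y) (comp h (@bp_s1 C X Y)) = comp (@bp_r2 C X Y) (comp h' (@bp_s1 C X Y)) ->
  comp (@bp_r1 C X Y) (comp h (@bp_s2 C X Y)) = comp (@bp_r1 C X Y) (comp h' (@bp_s2 C X Y)) ->
  comp (@bp_r2 C X Y) (comp h (@bp_s2 C X Y)) = comp (@bp_r2 C X Y) (comp h' (@bp_s2 C X Y)) ->
  h = h'.
Proof. intros; apply copair_ext; apply pair_ext; auto. Qed.

Section Ent.
Variables (X Y : Obj C) (a : Hom X X) (b : Hom Y X) (c : Hom X Y) (d : Hom Y Y).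
Lemma mx2_11 : comp (@bp_r1 C X Y) (comp (mx2 a b c d) (@bp_s1 C X Y)) = a.
Proof. unfold mx2. rewrite !addm_comp_r, !addm_comp_l. nrm. reflexivity. Qed.
Lemma mx2_12 : comp (@bp_r1 C X Y) (comp (mx2 a b c d) (@bp_s2 C X Y)) = b.
Proof. unfold mx2. rewrite !addm_comp_r, !addm_comp_l. nrm. reflexivity. Qed.
Lemma mx2_21 : comp (@bp_r2 C X Y) (comp (mx2 a b c d) (@bp_s1 C X Y)) = c.
Proof. unfold mx2. rewrite !addm_comp_r, !addm_comp_l. nrm. reflexivity. Qed.
Lemma mx2_22 : comp (@bp_r2 C X Y) (comp (mx2 a b c d) (@bp_s2 C X Y)) = d.
Proof. unfold mx2. rewrite !addm_comp_r, !addm_comp_l. nrm. reflexivity. Qed.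
End Ent.

Lemma epi_crit A B (h : Hom A B) :
  (forall W (w : Hom W B), comp (star h) w = zm W A -> w = zm W B) ->
  forall W (u v : Hom B W), comp u h = comp v h -> u = v.
Proof.
  intros Hk W u v E. destruct (diag_kernel C W) as [Z [g [Hg Hu]]].
  change (comp g (diag W) = zm W Z) in Hg.
  assert (H1 : comp (comp g (pr u v)) h = zm A Z).
  { rewrite <- comp_assoc, pair_comp, E, pair_diag, comp_assoc, Hg. apply zm_r. }
  assert (H2 : star (comp g (pr u v)) = zm Z B).
  { apply Hk. rewrite <- star_comp, H1, star_zm. reflexivity. }
  assert (H3 : comp g (pr u v) = zm B Z).
  { rewrite <- (star_invol _ _ _ (comp g (pr u v))), H2, star_zm. reflexivity. }
  destruct (Hu B (pr u v) H3) as [x [Hx _]].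
  change (comp (diag W) x = pr u v) in Hx.
  transitivity x.
  - rewrite <- (bp_pair_r1 C _ _ _ u v), <- Hx. unfold diag.
    rewrite comp_assoc, bp_pair_r1, comp_id_l. reflexivity.
  - rewrite <- (bp_pair_r2 C _ _ _ u v), <- Hx. unfold diag.
    rewrite comp_assoc, bp_pair_r2, comp_id_l. reflexivity.
Qed.


Lemma star_pair W X Y (a : Hom W X) (b : Hom W Y) :
  star (pr a b) = addm (comp (star a) (@bp_r1 C X Y)) (comp (star b) (@bp_r2 C X Y)).
Proof.
  apply copair_ext.
  - transitivity (star (comp (@bp_r1 C X Y) (pr a b))).
    + rewrite star_comp, star_r1. reflexivity.
    + rewrite bp_pair_r1, addm_comp_r. nrm. reflexivity.
  - transitivity (star (comp (@bp_r2 C X Y) (pr a b))).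
    + rewrite star_comp, star_r2. reflexivity.
    + rewrite bp_pair_r2, addm_comp_r. nrm. reflexivity.
Qed.

Lemma pss W X Y (a c : Hom W X) (b d : Hom W Y) :
  comp (star (pr a b)) (pr c d) = addm (comp (star a) c) (comp (star b) d).
Proof.
  rewrite star_pair, addm_comp_r, <- !comp_assoc, bp_pair_r1, bp_pair_r2. reflexivity.
Qed.

Lemma contr_codil X Y (f : Hom X Y) : contractive f -> exists T (t1 : Hom X T) (t2 : Hom Y T), is_codilation f t1 t2.
Proof.
  intros [c [Hc [Z [y Hy]]]]. subst c. exists (bp Y Z), (pr f y), (@bp_s1 C Y Z).
  split; [|split].
  - unfold isometry. rewrite pss. exact Hc.
  - unfold isometry. rewrite star_s1. apply bp_r1s1.
  - rewrite star_s1, bp_pair_r1. reflexivity.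
Qed.

Lemma codil_contr X Y (f : Hom X Y) T (t1 : Hom X T) (t2 : Hom Y T) :
  is_codilation f t1 t2 -> contractive f.
Proof.
  intros [I1 [I2 F]]. unfold isometry in *.
  destruct (ker_exists C T Y (star t2)) as [K [k [Ik [Hk0 Hku]]]].
  change (comp (star t2) k = zm K Y) in Hk0.
  destruct (bp_coprod C T Y K t2 k) as [U [U1 [U2 _]]].
  assert (UU : comp (star U) U = idm (bp Y K)).
  { apply copair_ext; rewrite comp_id_l, <- comp_assoc; [rewrite U1 | rewrite U2];
    apply pair_ext; rewrite comp_assoc; rewrite ?r1_star, ?r2_star, ?U1, ?U2; nrm.
    - exact I2.
    - rewrite <- (star_invol _ _ _ t2), <- star_comp, Hk0, star_zm. reflexivity.
    - exact Hk0.
    - exact Ik. }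
  assert (KU : forall W (w : Hom W T), comp (star U) w = zm W (bp Y K) -> w = zm W T).
  { intros W w Hw.
    assert (E1 : comp (star t2) w = zm W Y).
    { rewrite <- U1, star_comp, star_s1, <- comp_assoc, Hw, zm_l. reflexivity. }
    assert (E2 : comp (star k) w = zm W K).
    { rewrite <- U2, star_comp, star_s2, <- comp_assoc, Hw, zm_l. reflexivity. }
    destruct (Hku W w E1) as [z [Hz _]]. subst w.
    rewrite comp_assoc, Ik, comp_id_l in E2. subst z. apply zm_l. }
  assert (UU' : comp U (star U) = idm T).
  { apply (epi_crit _ _ U KU). rewrite <- comp_assoc, UU, comp_id_r, comp_id_l. reflexivity. }
  assert (SP : comp U (star U) = addm (comp t2 (star t2)) (comp k (star k))).
  { transitivity (comp U (comp (idm _) (star U))).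
    - rewrite comp_id_l. reflexivity.
    - rewrite id_split, addm_comp_r, addm_comp_l, <- !comp_assoc, r1_star, r2_star,
        !comp_assoc, U1, U2. reflexivity. }
  exists (comp (star (comp (star k) t1)) (comp (star k) t1)). split.
  - rewrite <- I1. transitivity (comp (star t1) (comp (comp U (star U)) t1));
    [| rewrite UU', comp_id_l; reflexivity]. rewrite SP.
    rewrite addm_comp_r, addm_comp_l, <- F, !star_comp, !star_invol, <- !comp_assoc.
    reflexivity.
  - exists K, (comp (star k) t1). reflexivity.
Qed.


Lemma iso_cancel A B D E (m : Hom A B) (a : Hom D A) (b : Hom E A) :
  comp (star m) m = idm A -> comp (star (comp m a)) (comp m b) = comp (star a) b.
Proof.
  intros Im. rewrite star_comp, <- comp_assoc, (comp_assoc _ _ _ _ _ (star m)), Im, comp_id_l.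
  reflexivity.
Qed.

Lemma codil_je X Y (f : Hom X Y) T (t1 : Hom X T) (t2 : Hom Y T) :
  is_codilation f t1 t2 ->
  exists T' (t1' : Hom X T') (t2' : Hom Y T'), is_codilation f t1' t2' /\ jointly_epic t1' t2'.
Proof.
  intros [I1 [I2 F]]. unfold isometry in *.
  destruct (bp_coprod C T X Y t1 t2) as [g [G1 [G2 _]]].
  destruct (ker_exists C T (bp X Y) (star g)) as [K0 [k0 [Ik0 [Hk0 Hk0u]]]].
  change (comp (star g) k0 = zm K0 (bp X Y)) in Hk0.
  destruct (ker_exists C T K0 (star k0)) as [M [m [Im [Hm0 Hmu]]]].
  change (comp (star k0) m = zm M K0) in Hm0.
  assert (Hg : comp (star k0) g = zm (bp X Y) K0).
  { rewrite <- (star_invol _ _ _ g), <- star_comp, Hk0, star_zm. reflexivity. }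
  destruct (Hmu _ g Hg) as [e [He _]].
  assert (KE : forall W (w : Hom W M), comp (star e) w = zm W (bp X Y) -> w = zm W M).
  { intros W w Hw.
    assert (E1 : comp (star g) (comp m w) = zm W (bp X Y)).
    { rewrite <- He, star_comp, <- comp_assoc, (comp_assoc _ _ _ _ _ (star m)), Im, comp_id_l.
      exact Hw. }
    destruct (Hk0u W (comp m w) E1) as [z [Hz _]].
    assert (Z0 : z = zm W K0).
    { rewrite <- (comp_id_l _ _ _ z), <- Ik0, <- comp_assoc, Hz, comp_assoc, Hm0, zm_r.
      reflexivity. }
    subst z. rewrite zm_l in Hz.
    rewrite <- (comp_id_l _ _ _ w), <- Im, <- comp_assoc, <- Hz, zm_l. reflexivity. }
  exists M, (comp e (@bp_s1 C X Y)), (comp e (@bp_s2 C X Y)). split; [split; [|split]|].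
  - unfold isometry. rewrite <- (iso_cancel _ _ _ _ m _ _ Im), !(comp_assoc _ _ _ _ _ m e), He, G1. exact I1.
  - unfold isometry. rewrite <- (iso_cancel _ _ _ _ m _ _ Im), !(comp_assoc _ _ _ _ _ m e), He, G2. exact I2.
  - rewrite <- (iso_cancel _ _ _ _ m _ _ Im), !(comp_assoc _ _ _ _ _ m e), He, G1, G2. exact F.
  - intros W u v E1 E2. apply (epi_crit _ _ e KE).
    apply copair_ext; rewrite <- !comp_assoc; assumption.
Qed.

Lemma codil_pos X Y (f : Hom X Y) T (t1 : Hom X T) (t2 : Hom Y T) :
  is_codilation f t1 t2 -> positive (mx2 (idm X) (star f) f (idm Y)).
Proof.
  intros [I1 [I2 F]]. unfold isometry in *.
  destruct (bp_coprod C T X Y t1 t2) as [U [U1 [U2 _]]].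
  exists T, U. apply mx_ext; rewrite mx2_11 || rewrite mx2_12 || rewrite mx2_21 || rewrite mx2_22;
  rewrite <- !comp_assoc, comp_assoc, ?r1_star, ?r2_star, ?U1, ?U2; auto.
  rewrite <- F, star_comp, star_invol. reflexivity.
Qed.

Lemma pos_codil X Y (f : Hom X Y) :
  positive (mx2 (idm X) (star f) f (idm Y)) ->
  exists T (t1 : Hom X T) (t2 : Hom Y T), is_codilation f t1 t2.
Proof.
  intros [W [z Hz]].
  exists W, (comp z (@bp_s1 C X Y)), (comp z (@bp_s2 C X Y)).
  assert (Ent : forall P Q (p : Hom P (bp X Y)) (q : Hom Q (bp X Y)),
    comp (star (comp z p)) (comp z q) = comp (star p) (comp (mx2 (idm X) (star f) f (idm Y)) q)).
  { intros. rewrite Hz, star_comp, <- !comp_assoc. reflexivity. }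
  split; [|split]; unfold isometry; rewrite Ent, ?star_s1, ?star_s2.
  - apply mx2_11.
  - apply mx2_22.
  - apply mx2_21.
Qed.

End H.

Theorem proposition7p14 (C : PreHilbertCat) (X Y : Obj C) (f : Hom X Y) :
  (contractive f <->
     exists (T : Obj C) (t1 : Hom X T) (t2 : Hom Y T),
       is_codilation f t1 t2 /\ jointly_epic t1 t2) /\
  (contractive f <->
     exists (T : Obj C) (t1 : Hom X T) (t2 : Hom Y T), is_codilation f t1 t2) /\
  (contractive f <->
     positive (mx2 (idm X) (star f) f (idm Y))).
Proof.
  split; [|split]; split.
  - intros H. destruct (contr_codil C X Y f H) as [T [t1 [t2 Ht]]].
    exact (codil_je C X Y f T t1 t2 Ht).
  - intros [T [t1 [t2 [Ht _]]]]. exact (codil_contr C X Y f T t1 t2 Ht).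
  - apply contr_codil.
  - intros [T [t1 [t2 Ht]]]. exact (codil_contr C X Y f T t1 t2 Ht).
  - intros H. destruct (contr_codil C X Y f H) as [T [t1 [t2 Ht]]].
    exact (codil_pos C X Y f T t1 t2 Ht).
  - intros H. destruct (pos_codil C X Y f H) as [T [t1 [t2 Ht]]].
    exact (codil_contr C X Y f T t1 t2 Ht).
Qed.
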